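(* Let $r>0$, assume $W$ satisfies (H), and let $u_0(x)=1$ for $x>0$, $u_0(x)=-1$ for $x<0$ (so $\mathcal{E}(u_0)=4/r$). If either $r\in\big(0,\frac{4}{4+c_W}\big)$, or $W$ is differentiable at $\pm1$, then there exists a monotone nondecreasing $v\in L^\infty(\mathbb{R})$ with $\lim_{x\to\pm\infty}v(x)=\pm1$ and $\mathcal{E}(v)<\mathcal{E}(u_0)$; in particular $u_0$ is not a minimizer of $\mathcal{E}$ among monotone nondecreasing functions connecting $-1$ to $1$.
   Context: For an interval $I$ and $u\in L^\infty(I)$, $\operatorname{osc}_I u:=\operatorname{ess\,sup}_I u-\operatorname{ess\,inf}_I u$. $\mathcal{E}(u):=\frac1{2r^2}\int_{\mathbb{R}}(\operatorname{osc}_{(x-r,x+r)}u)^2dx+\int_{\mathbb{R}}W(u(x))dx$. Assumption (H) on $W$: $W\in C(\mathbb{R})$, $W(-1)=W(1)=0<W(t)$ for $t\ne\pm1$; $W$ strictly decreasing on $(-\infty,-1)$, strictly increasing on $(1,+\infty)$; $W$ even on $[-1,1]$ with unique local maximum in $[-1,1]$ at $0$. $c_W:=\int_{-1}^1 W(s)\,ds$. *)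

(* Defs.v *)
From Stdlib Require Import Reals Lra ClassicalEpsilon.
Open Scope R_scope.

(* Lebesgue-null subset of R: coverable by countably many open intervals
   of arbitrarily small total length. *)
Definition null_set (A : R -> Prop) : Prop :=
  forall eps, 0 < eps ->
    exists a b : nat -> R,
      (forall n, a n <= b n) /\
      (forall x, A x -> exists n, a n < x /\ x < b n) /\
      (forall N, sum_f_R0 (fun n => b n - a n) N <= eps).

Definition is_glb (S : R -> Prop) (m : R) : Prop :=
  (forall c, S c -> m <= c) /\
  (forall m', (forall c, S c -> m' <= c) -> m' <= m).

Definition is_esssup (u : R -> R) (a b M : R) : Prop :=
  is_glb (fun c => null_set (fun x => a < x /\ x < b /\ c < u x)) M.

Definition esssup (u : R -> R) (a b : R) : R :=
  epsilon (inhabits 0) (is_esssup u a b).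

Definition essinf (u : R -> R) (a b : R) : R :=
  - esssup (fun x => - u x) a b.

Definition osc (u : R -> R) (a b : R) : R := esssup u a b - essinf u a b.

Definition energy_density (W : R -> R) (r : R) (u : R -> R) (x : R) : R :=
  (osc u (x - r) (x + r)) ^ 2 / (2 * r ^ 2) + W (u x).

(* E is the (finite) value of the energy of u: the nonnegative integrand is
   Riemann integrable on every [-n,n] and E = sup_n of these integrals
   (= the integral over R). *)
Definition has_energy (W : R -> R) (r : R) (u : R -> R) (E : R) : Prop :=
  exists pr : forall n : nat,
      Riemann_integrable (energy_density W r u) (- INR n) (INR n),
    is_lub (fun y => exists n, y = RiemannInt (pr n)) E.

Definition is_local_max_on_m11 (W : R -> R) (t : R) : Prop :=
  -1 <= t <= 1 /\
  exists delta, 0 < delta /\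
    forall s, -1 <= s <= 1 -> Rabs (s - t) < delta -> W s <= W t.

Definition hyp_H (W : R -> R) : Prop :=
  continuity W /\
  W (-1) = 0 /\ W 1 = 0 /\
  (forall t, t <> 1 -> t <> -1 -> 0 < W t) /\
  (forall s t, s < t -> t < -1 -> W t < W s) /\
  (forall s t, 1 < s -> s < t -> W s < W t) /\
  (forall t, -1 <= t <= 1 -> W (- t) = W t) /\
  is_local_max_on_m11 W 0 /\
  (forall t, is_local_max_on_m11 W t -> t = 0).

Definition u0 (x : R) : R := if Rlt_dec 0 x then 1 else -1.

(* Main.v *)
Require Import Defs.
From Stdlib Require Import Reals Lra List Classical ClassicalEpsilon Lia.
From Coquelicot Require Import Coquelicot.
Open Scope R_scope.

Definition sumlen (l : list (R*R)) : R := fold_right (fun p s => snd p - fst p + s) 0 l.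

Lemma sumlen_app l1 l2 : sumlen (l1 ++ l2) = sumlen l1 + sumlen l2.
Proof. induction l1 as [|x l1 IH]; simpl; [ring| rewrite IH; ring]. Qed.

Lemma sumlen_nonneg l : (forall i, In i l -> fst i <= snd i) -> 0 <= sumlen l.
Proof.
  induction l as [|x l IH]; simpl; intros H; [lra|].
  assert (fst x <= snd x) by (apply H; auto).
  assert (0 <= sumlen l) by (apply IH; intros; apply H; auto). lra.
Qed.

Lemma finite_cover n : forall l, (length l <= n)%nat ->
  (forall i, In i l -> fst i <= snd i) -> forall p x, p <= x ->
  (forall y, p <= y <= x -> exists i, In i l /\ fst i < y < snd i) ->
  x - p <= sumlen l.
Proof.
  induction n as [|n IH]; intros l Hlen Hl p x Hpx Hc.
  - destruct l; [|simpl in Hlen; lia].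
    destruct (Hc x) as [i [Hi _]]; [lra| destruct Hi].
  - destruct (Hc x) as [i [Hi Hix]]; [lra|].
    destruct (in_split _ _ Hi) as [l1 [l2 ->]].
    rewrite sumlen_app. simpl.
    assert (H1 : 0 <= sumlen l1) by (apply sumlen_nonneg; intros; apply Hl; apply in_or_app; auto).
    assert (H2 : 0 <= sumlen l2) by (apply sumlen_nonneg; intros; apply Hl; apply in_or_app; simpl; auto).
    destruct (Rlt_le_dec (fst i) p) as [Hlt|Hge].
    + lra.
    + assert (IH' : fst i - p <= sumlen (l1 ++ l2)).
      { apply IH.
        - rewrite app_length in *. simpl in Hlen. lia.
        - intros j Hj. apply Hl. apply in_app_or in Hj. apply in_or_app. simpl. tauto.
        - exact Hge.
        - intros y Hy. destruct (Hc y) as [j [Hj Hjy]]; [lra|].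
          exists j. split; [|exact Hjy].
          apply in_app_or in Hj. apply in_or_app. destruct Hj as [Hj|[Hj|Hj]]; auto.
          subst j. lra. }
      rewrite sumlen_app in IH'. lra.
Qed.

Lemma compact_cover (a b : nat -> R) p q : p <= q ->
  (forall y, p <= y <= q -> exists n, a n < y < b n) ->
  exists N, forall y, p <= y <= q -> exists n, (n <= N)%nat /\ a n < y < b n.
Proof.
  intros Hpq Hc.
  set (A := fun x => p <= x <= q /\ exists N, forall y, p <= y <= x -> exists n, (n<=N)%nat /\ a n < y < b n).
  assert (Ap : A p).
  { split; [lra|]. destruct (Hc p) as [n0 Hn0]; [lra|]. exists n0.
    intros y Hy. exists n0. split; [lia|]. replace y with p by lra. exact Hn0. }
  assert (Hb : bound A) by (exists q; intros x [Hx _]; lra).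
  destruct (completeness A Hb (ex_intro _ p Ap)) as [s [Hs1 Hs2]].
  assert (ps : p <= s) by (apply Hs1; exact Ap).
  assert (sq : s <= q) by (apply Hs2; intros x [Hx _]; lra).
  destruct (Hc s) as [m Hm]; [lra|].
  destruct (classic (exists x, A x /\ a m < x)) as [[x [Ax Hxm]]|Hn].
  2:{ exfalso. assert (s <= a m); [|lra]. apply Hs2. intros x Ax.
      destruct (Rle_lt_dec x (a m)); auto. exfalso; apply Hn; eauto. }
  assert (xs : x <= s) by (apply Hs1; exact Ax).
  destruct Ax as [Hxpq [N HN]].
  set (z := Rmin q ((s + b m)/2)).
  assert (Az : A z).
  { split. { unfold z; unfold Rmin; destruct (Rle_dec q ((s + b m)/2)); lra. }
    exists (Nat.max N m). intros y Hy.
    destruct (Rle_lt_dec y x).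
    - destruct (HN y) as [n [Hn1 Hn2]]; [lra|]. exists n; split; [lia|exact Hn2].
    - exists m; split; [lia|]. split; [lra|].
      assert (z <= (s + b m)/2) by (unfold z; apply Rmin_r). lra. }
  assert (zs : z <= s) by (apply Hs1; exact Az).
  assert (zq : z = q).
  { unfold z in *; unfold Rmin in *; destruct (Rle_dec q ((s + b m)/2)); lra. }
  rewrite zq in Az. destruct Az as [_ [N' HN']]. exists N'. exact HN'.
Qed.

Lemma sumlen_seq (a b : nat -> R) N :
  sumlen (map (fun n => (a n, b n)) (seq 0 (S N))) = sum_f_R0 (fun n => b n - a n) N.
Proof.
  induction N as [|N IH].
  - simpl. ring.
  - rewrite seq_S, map_app, sumlen_app, IH. simpl. ring.
Qed.

Lemma interval_not_null p q : p < q -> ~ null_set (fun x => p < x < q).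
Proof.
  intros Hpq H.
  destruct (H ((q-p)/4)) as [a [b [Hab [Hcov Hsum]]]]; [lra|].
  destruct (compact_cover a b (p + (q-p)/4) (q - (q-p)/4)) as [N HN]; [lra| |].
  { intros y Hy. apply Hcov. lra. }
  assert (Hf : (q - (q-p)/4) - (p + (q-p)/4) <= sumlen (map (fun n => (a n, b n)) (seq 0 (S N)))).
  { apply (finite_cover (length (map (fun n => (a n, b n)) (seq 0 (S N))))); auto.
    - intros i Hi. apply in_map_iff in Hi. destruct Hi as [n [<- _]]. simpl. apply Hab.
    - lra.
    - intros y Hy. destruct (HN y Hy) as [n [Hn1 Hn2]]. exists (a n, b n). split; [|exact Hn2].
      apply in_map_iff. exists n. split; auto. apply in_seq. lia. }
  rewrite sumlen_seq in Hf. specialize (Hsum N). lra.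
Qed.

Lemma null_sub (A B : R -> Prop) : (forall x, A x -> B x) -> null_set B -> null_set A.
Proof.
  intros HAB HB eps He. destruct (HB eps He) as [a [b [H1 [H2 H3]]]].
  exists a, b. split; [exact H1|split; [|exact H3]]. intros x Ax. apply H2, HAB, Ax.
Qed.

Lemma null_empty (A : R -> Prop) : (forall x, ~ A x) -> null_set A.
Proof.
  intros HA eps He. exists (fun _ => 0), (fun _ => 0). split; [intros; lra|split].
  - intros x Ax. exfalso; exact (HA x Ax).
  - intros N. induction N; simpl; lra.
Qed.

Lemma esssup_eq u a b M : (forall x, a < x < b -> u x <= M) ->
  (exists p q, p < q /\ forall x, p < x < q -> a < x < b /\ u x = M) ->
  esssup u a b = M.
Proof.
  intros Hle [p [q [Hpq Hpq2]]].
  assert (HM : is_esssup u a b M).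
  { split.
    - intros c Hc. destruct (Rle_lt_dec M c) as [|Hlt]; auto. exfalso.
      apply (interval_not_null p q Hpq). eapply null_sub; [|exact Hc].
      intros x Hx. destruct (Hpq2 x Hx) as [H1 H2]. split; [lra|split; lra].
    - intros m' Hm'. apply Hm'. apply null_empty. intros x [H1 [H2 H3]].
      specialize (Hle x (conj H1 H2)). lra. }
  unfold esssup.
  assert (HE := epsilon_spec (inhabits 0) (is_esssup u a b) (ex_intro _ M HM)).
  set (e := epsilon _ _) in *.
  destruct HE as [HE1 HE2]. destruct HM as [HM1 HM2].
  apply Rle_antisym; [apply HM2 | apply HE2]; auto.
Qed.

Lemma essinf_eq u a b m : (forall x, a < x < b -> m <= u x) ->
  (exists p q, p < q /\ forall x, p < x < q -> a < x < b /\ u x = m) ->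
  essinf u a b = m.
Proof.
  intros H1 [p [q [Hpq H2]]]. unfold essinf.
  rewrite (esssup_eq (fun x => - u x) a b (- m)); [ring| |].
  - intros x Hx. specialize (H1 x Hx). lra.
  - exists p, q. split; auto. intros x Hx. destruct (H2 x Hx) as [A B]. split; auto. lra.
Qed.

Lemma osc_eq u a b M m : (forall x, a < x < b -> m <= u x <= M) ->
  (exists p q, p < q /\ forall x, p < x < q -> a < x < b /\ u x = M) ->
  (exists p q, p < q /\ forall x, p < x < q -> a < x < b /\ u x = m) ->
  osc u a b = M - m.
Proof.
  intros H HM Hm. unfold osc. rewrite (esssup_eq u a b M), (essinf_eq u a b m); auto.
  - intros x Hx; apply H; auto.
  - intros x Hx; apply H; auto.
Qed.
Lemma piece (f : R -> R) a b k : (forall x, a < x < b -> f x = k) -> a <= b -> is_RInt f a b (k*(b-a)).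
Proof.
  intros H Hab. apply is_RInt_ext with (fun _ => k).
  - intros x Hx. rewrite Rmin_left in Hx by lra. rewrite Rmax_right in Hx by lra. symmetry; apply H; lra.
  - assert (HH := is_RInt_const (V:=R_NormedModule) a b k).
    replace (k*(b-a)) with ((b-a)*k) by ring. exact HH.
Qed.

Lemma chas (f : R -> R) a b c l1 l2 : is_RInt f a b l1 -> is_RInt f b c l2 -> is_RInt f a c (l1 + l2).
Proof. intros H1 H2. exact (is_RInt_Chasles (V:=R_NormedModule) f a b c l1 l2 H1 H2). Qed.

Lemma step_energy (f : R -> R) c1 c2 c3 c4 k1 k2 k3 :
  c1 <= c2 -> c2 <= c3 -> c3 <= c4 -> (forall x, 0 <= f x) ->
  (forall x, x < c1 -> f x = 0) ->
  (forall x, c1 < x < c2 -> f x = k1) ->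
  (forall x, c2 < x < c3 -> f x = k2) ->
  (forall x, c3 < x < c4 -> f x = k3) ->
  (forall x, c4 < x -> f x = 0) ->
  exists pr : forall n : nat, Riemann_integrable f (- INR n) (INR n),
    is_lub (fun y => exists n, y = RiemannInt (pr n)) (k1*(c2-c1)+k2*(c3-c2)+k3*(c4-c3)).
Proof.
  intros H12 H23 H34 Hpos H0 H1 H2 H3 H4.
  set (E := k1*(c2-c1)+k2*(c3-c2)+k3*(c4-c3)).
  assert (Hbig : forall N, - N <= c1 -> c4 <= N -> is_RInt f (-N) N E).
  { intros N HN1 HN2.
    replace E with ((((0*(c1 - -N)) + (k1*(c2-c1))) + (k2*(c3-c2))) + (k3*(c4-c3)) + (0*(N-c4))).
    2:{ unfold E. ring. }
    apply chas with c4; [|apply piece; [intros x Hx; apply H4; lra|lra]].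
    apply chas with c3; [|apply piece; auto].
    apply chas with c2; [|apply piece; auto].
    apply chas with c1; apply piece; auto.
    intros x Hx; apply H0; lra. }
  assert (Hany : forall B, 0 <= B -> ex_RInt f (-B) B /\ RInt f (-B) B <= E).
  { intros B HB.
    set (N := Rmax B (Rmax (-c1) c4)).
    assert (HN1 : B <= N) by apply Rmax_l.
    assert (HN2 : -c1 <= N) by (eapply Rle_trans; [apply Rmax_l|apply Rmax_r]).
    assert (HN3 : c4 <= N) by (eapply Rle_trans; [apply Rmax_r|apply Rmax_r]).
    assert (HI := Hbig N ltac:(lra) HN3).
    assert (HexN : ex_RInt f (-N) N) by (exists E; exact HI).
    assert (Hex1 : ex_RInt f (-N) B) by (apply (ex_RInt_Chasles_1 (V:=R_CompleteNormedModule)) with N; [lra|exact HexN]).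
    assert (Hex2 : ex_RInt f B N) by (apply (ex_RInt_Chasles_2 (V:=R_CompleteNormedModule)) with (-N); [lra|exact HexN]).
    assert (Hex3 : ex_RInt f (-N) (-B)) by (apply (ex_RInt_Chasles_1 (V:=R_CompleteNormedModule)) with B; [lra|exact Hex1]).
    assert (Hex4 : ex_RInt f (-B) B) by (apply (ex_RInt_Chasles_2 (V:=R_CompleteNormedModule)) with (-N); [lra|exact Hex1]).
    split; [exact Hex4|].
    assert (Hc1 := RInt_Chasles (V:=R_CompleteNormedModule) f (-N) (-B) B Hex3 Hex4).
    assert (Hc2 := RInt_Chasles (V:=R_CompleteNormedModule) f (-N) B N Hex1 Hex2).
    rewrite (is_RInt_unique (V:=R_CompleteNormedModule) _ _ _ _ HI) in Hc2.
    assert (0 <= RInt f (-N) (-B)) by (apply RInt_ge_0; auto; lra).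
    assert (0 <= RInt f B N) by (apply RInt_ge_0; auto; lra).
    unfold plus in Hc1, Hc2; simpl in Hc1, Hc2. lra. }
  assert (pr : forall n : nat, Riemann_integrable f (- INR n) (INR n)).
  { intros n. apply ex_RInt_Reals_0. apply Hany. apply pos_INR. }
  exists pr. split.
  - intros y [n ->]. rewrite <- RInt_Reals. apply Hany, pos_INR.
  - intros b Hb. apply Hb.
    destruct (INR_unbounded (Rmax (-c1) c4)) as [n Hn].
    exists n. rewrite <- RInt_Reals. symmetry. apply is_RInt_unique. apply Hbig.
    + assert (-c1 <= Rmax (-c1) c4) by apply Rmax_l. lra.
    + assert (c4 <= Rmax (-c1) c4) by apply Rmax_r. lra.
Qed.
Lemma W_nonneg W : hyp_H W -> forall x, 0 <= W x.
Proof.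
  intros [_ [Hm [Hp [Hpos _]]]] x.
  destruct (Req_dec x 1) as [->|h1]; [lra|].
  destruct (Req_dec x (-1)) as [->|h2]; [lra|].
  left; apply Hpos; auto.
Qed.

Lemma exists_t (W : R -> R) (r : R) :
  0 < r -> hyp_H W ->
  ((exists pr : Riemann_integrable W (-1) 1,
       r < 4 / (4 + RiemannInt pr)) \/
   ((exists l, derivable_pt_lim W 1 l) /\ (exists l, derivable_pt_lim W (-1) l))) ->
  exists t, -1 < t < 1 /\ r * r * W t < 1 - t * t.
Proof.
  intros Hr HW Hc.
  assert (Wn := W_nonneg W HW).
  destruct HW as [_ [Wm1 [W1 _]]].
  destruct Hc as [[pr Hpr] | [[l Hl] _]].
  - apply NNPP. intros Hn.
    assert (Hge : forall s, -1 < s < 1 -> (1 - s*s)/(r*r) <= W s).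
    { intros s Hs. destruct (Rle_lt_dec (r * r * W s) (1 - s*s)) as [Hle|Hlt].
      - destruct Hle as [Hlt|Heq].
        + exfalso; apply Hn; exists s; split; auto.
        + rewrite <- Heq. right. field. lra.
      - left. apply Rmult_lt_reg_l with (r*r); [nra|].
        replace (r * r * ((1 - s * s) / (r * r))) with (1 - s*s) by (field; lra). lra. }
    set (g := fun s => (1 - s*s)/(r*r)).
    set (F := fun s => (s - s^3/3)/(r*r)).
    assert (Hg : is_RInt g (-1) 1 (4/(3*(r*r)))).
    { assert (HH := is_RInt_derive (V:=R_CompleteNormedModule) F g (-1) 1).
      replace (4/(3*(r*r))) with (minus (F 1) (F (-1))).
      - apply HH.
        + intros x _. unfold F, g. auto_derive; [auto|field; lra].
        + intros x _. apply continuity_pt_filterlim. unfold g. reg.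
      - unfold minus, plus, opp; simpl. unfold F. field. lra. }
    assert (Hex : ex_RInt W (-1) 1) by (apply ex_RInt_Reals_1; exact pr).
    assert (Hle := RInt_le g W (-1) 1 ltac:(lra) (ex_intro _ _ Hg) Hex).
    rewrite (is_RInt_unique (V:=R_CompleteNormedModule) _ _ _ _ Hg) in Hle.
    rewrite (RInt_Reals W (-1) 1 pr) in Hle.
    assert (Hle' : 4/(3*(r*r)) <= RiemannInt pr) by (apply Hle; intros x Hx; apply Hge; lra).
    set (c := RiemannInt pr) in *.
    assert (Hc3 : 4 <= c * (3*(r*r))).
    { replace 4 with (4/(3*(r*r)) * (3*(r*r))) by (field; lra).
      apply Rmult_le_compat_r; [nra|exact Hle']. }
    assert (HD : 0 < 4 + c) by nra.
    assert (Hrd : r * (4 + c) < 4).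
    { replace 4 with (4/(4+c) * (4+c)) at 2 by (field; lra).
      apply Rmult_lt_compat_r; auto. }
    assert (3*r*(r*(4+c)) < 3*r*4) by (apply Rmult_lt_compat_l; lra).
    nra.
  - set (e := / (2 * (r*r))).
    assert (He : 0 < e) by (unfold e; apply Rinv_0_lt_compat; nra).
    assert (Her : r * r * 2 * e = 1) by (unfold e; field; lra).
    destruct (Hl e He) as [delta Hd].
    assert (Hdp := cond_pos delta).
    set (h1 := delta/2).
    assert (Hh1 := Hd h1 ltac:(unfold h1; lra) ltac:(unfold h1; rewrite Rabs_right; lra)).
    set (s := Rmin (delta/2) (1/2)).
    assert (Hs1 : s <= delta/2) by apply Rmin_l.
    assert (Hs2 : s <= 1/2) by apply Rmin_r.
    assert (Hs0 : 0 < s) by (unfold s; unfold Rmin; destruct (Rle_dec (delta/2) (1/2)); lra).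
    assert (Hh2 := Hd (-s) ltac:(lra) ltac:(rewrite Rabs_left; lra)).
    rewrite W1 in Hh1, Hh2.
    set (q1 := (W (1 + h1) - 0) / h1) in Hh1.
    set (q2 := (W (1 + - s) - 0) / - s) in Hh2.
    assert (Hq1 : 0 <= q1).
    { unfold q1. unfold Rdiv. apply Rmult_le_pos; [specialize (Wn (1+h1)); lra|].
      left; apply Rinv_0_lt_compat; unfold h1; lra. }
    assert (Hq2 : W (1 + - s) = - s * q2) by (unfold q2; field; lra).
    apply Rabs_def2 in Hh1. apply Rabs_def2 in Hh2.
    exists (1 + - s). split; [lra|].
    rewrite Hq2.
    assert (q2 > - 2 * e) by lra.
    assert (- s * q2 < 2 * e * s) by nra.
    assert (r * r * (- s * q2) < r * r * (2 * e * s)) by (apply Rmult_lt_compat_l; nra).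
    replace (r * r * (2 * e * s)) with s in H1 by (transitivity (r*r*2*e*s); [rewrite Her; ring| ring]).
    nra.
Qed.
Definition vstep (t r x : R) : R := if Rlt_dec x 0 then -1 else if Rlt_dec x r then t else 1.

Ltac vt := unfold vstep, u0 in *; repeat match goal with |- context [Rlt_dec ?a ?b] => destruct (Rlt_dec a b) end; lra.

Lemma dens_nonneg W r u : 0 < r -> hyp_H W -> forall x, 0 <= energy_density W r u x.
Proof.
  intros Hr HW x. unfold energy_density.
  assert (0 <= W (u x)) by (apply W_nonneg; auto).
  assert (0 <= osc u (x - r) (x + r) ^ 2 / (2 * r ^ 2)).
  { unfold Rdiv. apply Rmult_le_pos; [apply pow2_ge_0|]. left; apply Rinv_0_lt_compat; nra. }
  lra.
Qed.

Theorem proposition1p2 (W : R -> R) (r : R) :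
  0 < r ->
  hyp_H W ->
  ((exists pr : Riemann_integrable W (-1) 1,
       r < 4 / (4 + RiemannInt pr)) \/
   ((exists l, derivable_pt_lim W 1 l) /\ (exists l, derivable_pt_lim W (-1) l))) ->
  exists v : R -> R,
    (forall x y, x <= y -> v x <= v y) /\
    (exists M, forall x, Rabs (v x) <= M) /\
    (forall eps, 0 < eps -> exists X, forall x, X < x -> Rabs (v x - 1) < eps) /\
    (forall eps, 0 < eps -> exists X, forall x, x < X -> Rabs (v x + 1) < eps) /\
    exists Ev E0, has_energy W r v Ev /\ has_energy W r u0 E0 /\ Ev < E0.
Proof.
  intros Hr HW Hc.
  destruct (exists_t W r Hr HW Hc) as [t [Ht Hwt]].
  assert (Wm1 : W (-1) = 0) by apply (proj1 (proj2 HW)).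
  assert (W1 : W 1 = 0) by apply (proj1 (proj2 (proj2 HW))).
  exists (vstep t r). split; [|split; [|split; [|split]]].
  - intros x y Hxy. vt.
  - exists 1. intros x. apply Rabs_le. vt.
  - intros eps He. exists r. intros x Hx. replace (vstep t r x - 1) with 0 by vt.
    rewrite Rabs_R0; lra.
  - intros eps He. exists 0. intros x Hx. replace (vstep t r x + 1) with 0 by vt.
    rewrite Rabs_R0; lra.
  - assert (Hr2 : 0 < r * r) by nra.
    destruct (step_energy (energy_density W r (vstep t r)) (-r) 0 r (2*r)
      ((t+1)^2/(2*r^2)) (4/(2*r^2) + W t) ((1-t)^2/(2*r^2)))
      as [prv Hv]; try lra.
    + apply dens_nonneg; auto.
    + intros x Hx. unfold energy_density.
      rewrite (osc_eq _ _ _ (-1) (-1)).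
      * replace (vstep t r x) with (-1) by vt. rewrite Wm1. field. lra.
      * intros y Hy. split; vt.
      * exists (x-r), (x+r). split; [lra|]. intros y Hy. split; [lra|vt].
      * exists (x-r), (x+r). split; [lra|]. intros y Hy. split; [lra|vt].
    + intros x Hx. unfold energy_density.
      rewrite (osc_eq _ _ _ t (-1)).
      * replace (vstep t r x) with (-1) by vt. rewrite Wm1. field. lra.
      * intros y Hy. split; vt.
      * exists 0, (x+r). split; [lra|]. intros y Hy. split; [lra|vt].
      * exists (x-r), 0. split; [lra|]. intros y Hy. split; [lra|vt].
    + intros x Hx. unfold energy_density.
      rewrite (osc_eq _ _ _ 1 (-1)).
      * replace (vstep t r x) with t by vt. field. lra.
      * intros y Hy. split; vt.
      * exists r, (x+r). split; [lra|]. intros y Hy. split; [lra|vt].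
      * exists (x-r), 0. split; [lra|]. intros y Hy. split; [lra|vt].
    + intros x Hx. unfold energy_density.
      rewrite (osc_eq _ _ _ 1 t).
      * replace (vstep t r x) with 1 by vt. rewrite W1. field. lra.
      * intros y Hy. split; vt.
      * exists r, (x+r). split; [lra|]. intros y Hy. split; [lra|vt].
      * exists (x-r), r. split; [lra|]. intros y Hy. split; [lra|vt].
    + intros x Hx. unfold energy_density.
      rewrite (osc_eq _ _ _ 1 1).
      * replace (vstep t r x) with 1 by vt. rewrite W1. field. lra.
      * intros y Hy. split; vt.
      * exists (x-r), (x+r). split; [lra|]. intros y Hy. split; [lra|vt].
      * exists (x-r), (x+r). split; [lra|]. intros y Hy. split; [lra|vt].
    + destruct (step_energy (energy_density W r u0) (-r) 0 r (2*r)
        (4/(2*r^2)) (4/(2*r^2)) 0)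
        as [pr0 H0]; try lra.
      * apply dens_nonneg; auto.
      * intros x Hx. unfold energy_density.
        rewrite (osc_eq _ _ _ (-1) (-1)).
        -- replace (u0 x) with (-1) by vt. rewrite Wm1. field. lra.
        -- intros y Hy. split; vt.
        -- exists (x-r), (x+r). split; [lra|]. intros y Hy. split; [lra|vt].
        -- exists (x-r), (x+r). split; [lra|]. intros y Hy. split; [lra|vt].
      * intros x Hx. unfold energy_density.
        rewrite (osc_eq _ _ _ 1 (-1)).
        -- replace (u0 x) with (-1) by vt. rewrite Wm1. field. lra.
        -- intros y Hy. split; vt.
        -- exists 0, (x+r). split; [lra|]. intros y Hy. split; [lra|vt].
        -- exists (x-r), 0. split; [lra|]. intros y Hy. split; [lra|vt].
      * intros x Hx. unfold energy_density.
        rewrite (osc_eq _ _ _ 1 (-1)).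
        -- replace (u0 x) with 1 by vt. rewrite W1. field. lra.
        -- intros y Hy. split; vt.
        -- exists 0, (x+r). split; [lra|]. intros y Hy. split; [lra|vt].
        -- exists (x-r), 0. split; [lra|]. intros y Hy. split; [lra|vt].
      * intros x Hx. unfold energy_density.
        rewrite (osc_eq _ _ _ 1 1).
        -- replace (u0 x) with 1 by vt. rewrite W1. field. lra.
        -- intros y Hy. split; vt.
        -- exists (x-r), (x+r). split; [lra|]. intros y Hy. split; [lra|vt].
        -- exists (x-r), (x+r). split; [lra|]. intros y Hy. split; [lra|vt].
      * intros x Hx. unfold energy_density.
        rewrite (osc_eq _ _ _ 1 1).
        -- replace (u0 x) with 1 by vt. rewrite W1. field. lra.
        -- intros y Hy. split; vt.
        -- exists (x-r), (x+r). split; [lra|]. intros y Hy. split; [lra|vt].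
        -- exists (x-r), (x+r). split; [lra|]. intros y Hy. split; [lra|vt].
      * eexists; eexists. split; [exists prv; exact Hv|]. split; [exists pr0; exact H0|].
        assert (Hq : 0 < (1 - t*t - r*r*W t)/r) by (apply Rdiv_lt_0_compat; lra).
        match goal with |- ?a < ?b => assert (b - a = (1 - t*t - r*r*W t)/r) by (field; lra) end.
        lra.
Qed.
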